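(* Let $K$ be an $n$-dimensional oriented, well-centered, manifold-like simplicial complex with boundary $\partial K$ and circumcentric dual complex, and let $p,q$ be positive integers with $p+q=n+1$. Let $\mathcal F^d_{p,q}=\Omega_d^p(\star_{\mathrm i}K)\times\Omega_d^q(K)\times\Omega_d^{n-p}(\partial K)$ and $\mathcal E^d_{p,q}=\Omega_d^{n-p}(K)\times\Omega_d^{n-q}(\star_{\mathrm i}K)\times\Omega_d^{n-q}(\partial(\star K))$, with the symmetric bilinear form on $\mathcal F^d_{p,q}\times\mathcal E^d_{p,q}$ $$\langle\!\langle(\hat f_p^1,f_q^1,f_b^1,e_p^1,\hat e_q^1,\hat e_b^1),(\hat f_p^2,f_q^2,f_b^2,e_p^2,\hat e_q^2,\hat e_b^2)\rangle\!\rangle_d=\langle e_p^1\wedge\hat f_p^2+\hat e_q^1\wedge f_q^2+e_p^2\wedge\hat f_p^1+\hat e_q^2\wedge f_q^1,K\rangle+\langle\hat e_b^1\wedge f_b^2+\hat e_b^2\wedge f_b^1,\partial K\rangle .$$ Define $\mathcal D_d\subset\mathcal F^d_{p,q}\times\mathcal E^d_{p,q}$ as the set of $(\hat f_p,f_q,f_b,e_p,\hat e_q,\hat e_b)$ such that $$\hat f_p=(-1)^{pq+1}\big(\mathbf d_{\mathrm i}\hat e_q+\mathbf d_{\mathrm b}\hat e_b\big),\qquad f_q=\mathbf d e_p,\qquad f_b=(-1)^p\,e_p|_{\partial K}.$$ Then $\mathcal D_d=\mathcal D_d^{\perp}$ (orthogonal complement with respect to $\langle\!\langle\cdot,\cdot\rangle\!\rangle_d$),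 i.e. $\mathcal D_d$ is a Dirac structure.
   Context: Setting. $K$ is an $n$-dimensional manifold-like simplicial complex (every simplex is a face of some $n$-simplex), oriented ($n$-simplices sharing an $(n-1)$-face are coherently oriented, lower-dimensional simplices are individually oriented) and well-centered (every simplex contains its circumcenter in its interior). $\partial K$ is the $(n-1)$-dimensional boundary subcomplex: the $(n-1)$-simplices that are faces of exactly one $n$-simplex, together with all their faces. For simplices $\sigma^{j-1}\prec\sigma^{j}$ let $[\sigma^{j-1}:\sigma^{j}]\in\{\pm1\}$ be the coefficient of $\sigma^{j-1}$ in the simplicial boundary $\partial[v_0,\dots,v_j]=\sum_i(-1)^i[v_0,\dots,\widehat{v_i},\dots,v_j]$. Dual cells. Each simplex $\sigma^j\in K$ has a circumcentric interior dual $(n-j)$-cell $\star_{\mathrm i}\sigma^j$; each $\tau^j\in\partial K$ has a boundary dual $(n-1-j)$-cell $\star_{\mathrm b}\tau^j$ (its circumcentric dual within $\partial K$). Discrete forms. $\Omega_d^j(K)$ (resp. $\Omega_d^j(\partial K)$): real functions on the $j$-simplices of $K$ (resp. $\partial K$); $\Omega_d^m(\star_{\mathrm i}K)$: real functions on interior dual $m$-cells $\star_{\mathrm i}\sigma^{n-m}$; $\Omega_d^m(\partial(\star K))$: real functions on boundary dual $m$-cells $\star_{\mathrm b}\tau^{n-1-m}$, $\tau\in\partial K$. For primal $\alpha$, $\alpha|_{\partial K}$ is its restriction to simplices of $\partial K$. Derivatives. Primal: $(\mathbf d\alpha)(\sigma^{j})=\sum_{\sigma^{j-1}\prec\sigma^{j}}[\sigma^{j-1}:\sigma^{j}]\alpha(\sigma^{j-1})$.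 Dual: for $\hat\beta_{\mathrm i}\in\Omega_d^{m}(\star_{\mathrm i}K)$, $\hat\beta_{\mathrm b}\in\Omega_d^{m}(\partial(\star K))$, $m\le n-1$, with $j=n-m$: $(\mathbf d_{\mathrm i}\hat\beta_{\mathrm i})(\star_{\mathrm i}\sigma^{j-1})=(-1)^{j}\sum_{\sigma^{j}\succ\sigma^{j-1}}[\sigma^{j-1}:\sigma^{j}]\hat\beta_{\mathrm i}(\star_{\mathrm i}\sigma^{j})$, and $(\mathbf d_{\mathrm b}\hat\beta_{\mathrm b})(\star_{\mathrm i}\sigma^{j-1})=(-1)^{j-1}\hat\beta_{\mathrm b}(\star_{\mathrm b}\sigma^{j-1})$ if $\sigma^{j-1}\in\partial K$, $0$ otherwise; both lie in $\Omega_d^{m+1}(\star_{\mathrm i}K)$. Wedge pairings (extended bilinearly, so $\langle a+b,K\rangle=\langle a,K\rangle+\langle b,K\rangle$). For $\alpha\in\Omega_d^j(K)$, $\hat\beta\in\Omega_d^{n-j}(\star_{\mathrm i}K)$: $\langle\alpha\wedge\hat\beta,K\rangle=\sum_{\sigma^j\in K}\alpha(\sigma^j)\hat\beta(\star_{\mathrm i}\sigma^j)$, $\langle\hat\beta\wedge\alpha,K\rangle=(-1)^{j(n-j)}\langle\alpha\wedge\hat\beta,K\rangle$. For $\alpha\in\Omega_d^j(\partial K)$, $\hat\gamma\in\Omega_d^{n-1-j}(\partial(\star K))$: $\langle\alpha\wedge\hat\gamma,\partial K\rangle=\sum_{\tau^j\in\partial K}\alpha(\tau^j)\hat\gamma(\star_{\mathrm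 b}\tau^j)$, $\langle\hat\gamma\wedge\alpha,\partial K\rangle=(-1)^{j(n-1-j)}\langle\alpha\wedge\hat\gamma,\partial K\rangle$. A Dirac structure is a linear subspace $\mathcal D\subset\mathcal F\times\mathcal E$ with $\mathcal D=\mathcal D^\perp$ for the given symmetric bilinear form. *)

(* Defs.v *)
From HB Require Import structures.
From mathcomp Require Import all_boot all_order all_algebra.
From mathcomp Require Import reals.
Set Implicit Arguments.
Unset Strict Implicit.
Unset Printing Implicit Defensive.
Import Order.TTheory GRing.Theory Num.Theory.
Local Open Scope ring_scope.

Section DEC.
Variables (R : realType) (N : nat).

(* Vertices are 'I_N; a simplex is its (nonempty) vertex set; a j-simplex has
   j+1 vertices.  A discrete form (primal, interior-dual or boundary-dual) is a
   real function on simplices: a primal j-form is evaluated on j-simplices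
   sigma, an interior dual m-form on the dual cells *_i sigma^(n-m) (hence is
   indexed by sigma^(n-m)), a boundary dual m-form on *_b tau^(n-1-m), tau in
   dK (indexed by tau).  Values off the relevant index set are irrelevant. *)
Local Notation simplex := {set 'I_N}.
Definition form := {set 'I_N} -> R.
Local Notation cplx := {set {set 'I_N}}.

Definition simplicial_complex (K : cplx) : Prop :=
  (forall s : simplex, s \in K -> s != set0) /\
  (forall s t : simplex, s \in K -> t \subset s -> t != set0 -> t \in K).

Definition manifold_like (n : nat) (K : cplx) : Prop :=
  K != set0 /\
  forall s : simplex, s \in K -> exists2 S : simplex, S \in K & (#|S| = n.+1)%N /\ s \subset S.

Definition facet (t s : simplex) : bool := (t \subset s) && (#|s| == #|t|.+1)%N.

(* An orientation of every simplex, given relative to the increasing vertex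
   order: [o s = true] means s is oriented opposite to [v0 < v1 < ... < vj]. *)
Definition orientation := simplex -> bool.

Definition osign (b : bool) : R := if b then -1 else 1.

(* position in s (in increasing order) of the vertex of s not in t *)
Definition rem_index (t s : simplex) : nat :=
  #|[set v in s | [exists w in s :\: t, (val v < val w)%N]]|.

(* [t : s] = coefficient of t in the simplicial boundary of s, for t a facet
   of s, with orientations o:
   d[v0..vj] = sum_i (-1)^i [v0..^vi..vj]. *)
Definition incidence (o : orientation) (t s : simplex) : R :=
  osign (o t) * osign (o s) * (-1) ^+ rem_index t s.

(* Oriented: n-simplices sharing an (n-1)-face are coherently oriented, i.e.
   they induce opposite orientations on the common face. *)
Definition coherently_oriented (n : nat) (K : cplx) (o : orientation) : Prop :=
  forall t s1 s2 : simplex, t \in K -> s1 \in K -> s2 \in K ->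
    (#|s1| = n.+1)%N -> (#|s2| = n.+1)%N -> s1 != s2 ->
    facet t s1 -> facet t s2 ->
    incidence o t s1 = - incidence o t s2.

(* Boundary subcomplex dK: (n-1)-simplices that are faces of exactly one
   n-simplex, together with all their (nonempty) faces. *)
Definition bnd (n : nat) (K : cplx) : cplx :=
  [set t : simplex | (t != set0) &&
    [exists r : simplex, [&& r \in K, #|r| == n, t \subset r &
        #|[set S in K | (#|S| == n.+1) && (r \subset S)]| == 1]]]%N.

Variable m : nat.
Definition embedding := 'I_N -> 'rV[R]_m.

Definition sqdist (x y : 'rV[R]_m) : R := \sum_(i < m) (x 0 i - y 0 i) ^+ 2.

Definition bary (x : embedding) (s : simplex) (l : 'I_N -> R) : 'rV[R]_m :=
  \sum_(v in s) l v *: x v.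

Definition aff_indep (x : embedding) (s : simplex) : Prop :=
  forall mu : 'I_N -> R, \sum_(v in s) mu v = 0 -> bary x s mu = 0 ->
    forall v, v \in s -> mu v = 0.

Definition in_closed_simplex (x : embedding) (s : simplex) (c : 'rV[R]_m) :=
  exists l : 'I_N -> R, [/\ forall v, v \in s -> 0 <= l v,
    \sum_(v in s) l v = 1 & c = bary x s l].

Definition geometric (x : embedding) (K : cplx) : Prop :=
  (forall s : simplex, s \in K -> aff_indep x s) /\
  (forall (s t : simplex) c, s \in K -> t \in K -> in_closed_simplex x s c ->
     in_closed_simplex x t c -> in_closed_simplex x (s :&: t) c).

(* well-centered: the circumcenter (the point of the affine hull equidistant
   from all vertices) lies in the interior (all barycentric coordinates > 0) *)
Definition well_centered (x : embedding) (K : cplx) : Prop :=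
  forall s : simplex, s \in K -> exists l : 'I_N -> R,
    [/\ forall v, v \in s -> 0 < l v, \sum_(v in s) l v = 1 &
        exists r, forall v, v \in s -> sqdist (bary x s l) (x v) = r].

Variables (n : nat) (K : cplx) (o : orientation).

Definition dprim (a : form) : form := fun s =>
  \sum_(t in K | facet t s) incidence o t s * a t.

(* interior dual derivative: (d_i b)( *_i t^(j-1)) with j = #|t| *)
Definition d_i (b : form) : form := fun t =>
  (-1) ^+ #|t| * \sum_(s in K | facet t s) incidence o t s * b s.

Definition d_b (b : form) : form := fun t =>
  if t \in bnd n K then (-1) ^+ (#|t|.-1) * b t else 0.

(* <alpha /\ beta^, K> for alpha a primal j-form *)
Definition wedgeK (j : nat) (a b : form) : R :=
  \sum_(s in K | #|s| == j.+1) a s * b s.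
(* <beta^ /\ alpha, K> for alpha a primal j-form *)
Definition wedgeK_dual (j : nat) (b a : form) : R :=
  (-1) ^+ (j * (n - j)) * wedgeK j a b.
(* <alpha /\ gamma^, dK> for alpha a primal j-form on dK *)
Definition wedgeB (j : nat) (a g : form) : R :=
  \sum_(t in bnd n K | #|t| == j.+1) a t * g t.
(* <gamma^ /\ alpha, dK> *)
Definition wedgeB_dual (j : nat) (g a : form) : R :=
  (-1) ^+ (j * (n.-1 - j)) * wedgeB j a g.

(* elements of F^d_{p,q} x E^d_{p,q} *)
Record port := Port {
  fp : form;  (* Omega^p( *_i K)      *)
  fq : form;  (* Omega^q(K)          *)
  fb : form;  (* Omega^(n-p)(dK)     *)
  ep : form;  (* Omega^(n-p)(K)      *)
  eq : form;  (* Omega^(n-q)( *_i K)  *)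
  eb : form   (* Omega^(n-q)(d( *K))  *)
}.

Variables p q : nat.

Definition pairing (x y : port) : R :=
  (wedgeK (n - p) (ep x) (fp y) + wedgeK_dual q (eq x) (fq y)
   + wedgeK (n - p) (ep y) (fp x) + wedgeK_dual q (eq y) (fq x))
  + (wedgeB_dual (n - p) (eb x) (fb y) + wedgeB_dual (n - p) (eb y) (fb x)).

Definition Dd (x : port) : Prop :=
  [/\ forall s : simplex, s \in K -> (#|s| = (n - p).+1)%N ->
        fp x s = (-1) ^+ (p * q + 1) * (d_i (eq x) s + d_b (eb x) s),
      forall s : simplex, s \in K -> (#|s| = q.+1)%N -> fq x s = dprim (ep x) s &
      forall t : simplex, t \in bnd n K -> (#|t| = (n - p).+1)%N ->
        fb x t = (-1) ^+ p * ep x t].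

End DEC.

Definition dirac_structure (T R : Type) (zero : R) (D : T -> Prop)
  (B : T -> T -> R) : Prop :=
  forall y, D y <-> (forall x, D x -> B x y = zero).

(* Main.v *)
Require Import Defs.
From HB Require Import structures.
From mathcomp Require Import all_boot all_order all_algebra.
From mathcomp Require Import reals.
From mathcomp Require Import ring lra zify.
Set Implicit Arguments.
Unset Strict Implicit.
Unset Printing Implicit Defensive.
Import Order.TTheory GRing.Theory Num.Theory.
Local Open Scope ring_scope.

Lemma sgnE (R : realType) (k : nat) : (-1) ^+ k = (if odd k then -1 else 1 : R).
Proof. by rewrite -signr_odd; case: (odd k); rewrite ?expr1 ?expr0. Qed.

Section Lem.
Variables (R : realType) (N n : nat) (K : {set {set 'I_N}}) (o : {set 'I_N} -> bool).
Variable j : nat.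

Definition II (a e : Defs.form R N) : R :=
  \sum_(s in K | (#|s| == j.+1)%N) a s * \sum_(S in K | facet s S) incidence R o s S * e S.

Lemma exchange (a e : Defs.form R N) :
  II a e = wedgeK K j.+1 (dprim K o a) e.
Proof.
rewrite /II /wedgeK /dprim.
transitivity (\sum_(s : {set 'I_N}) \sum_(S : {set 'I_N})
   (if [&& s \in K, #|s| == j.+1, S \in K & facet s S]%N
    then a s * (incidence R o s S * e S) else 0)).
  rewrite big_mkcond; apply: eq_bigr => s _ /=.
  case: ifP => /= H; last by rewrite big1 // => S _; rewrite andbA H.
  rewrite big_distrr big_mkcond; apply: eq_bigr => S _ /=.
  by rewrite (andbA (s \in K)) H.
rewrite exchange_big [RHS]big_mkcond; apply: eq_bigr => S _ /=.
case: ifP => /= H.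
  rewrite big_distrl [RHS]big_mkcond. apply: eq_bigr => s _ /=.
  case: (boolP (s \in K)) => sK; last by [].
  case: (boolP (facet s S)) => fsS; last by rewrite !andbF.
  move: (fsS) H => /andP[_ /eqP cS] /andP[SK /eqP cS2].
  rewrite cS2 in cS; move: cS => [->]; rewrite eqxx SK /=; ring.
apply: big1 => s _; case: ifP => // /and4P[sK /eqP cs SK /andP[_ /eqP cS]].
by move: H; rewrite SK cS cs eqxx.
Qed.


Lemma bnd_sub (t : {set 'I_N}) : simplicial_complex K -> t \in bnd n K -> t \in K.
Proof.
move=> [_ HK]; rewrite inE => /andP[t0 /existsP[r /and4P[rK _ tr _]]].
exact: HK rK tr t0.
Qed.

Lemma wedgeB_K (a g : Defs.form R N) : simplicial_complex K ->
  wedgeB n K j a g =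
  \sum_(s in K | (#|s| == j.+1)%N) a s * (if s \in bnd n K then g s else 0).
Proof.
move=> HK; rewrite /wedgeB big_mkcond [RHS]big_mkcond; apply: eq_bigr => s _.
case: (boolP (s \in bnd n K)) => sb /=; last by case: ifP => // _; rewrite mulr0.
by rewrite (bnd_sub HK sb).
Qed.

Lemma L1 (f e b a : Defs.form R N) (c : R) : simplicial_complex K ->
  (forall s, s \in K -> #|s| = j.+1 -> f s = c * (d_i K o e s + d_b n K b s)) ->
  wedgeK K j a f = c * ((-1) ^+ j.+1 * II a e + (-1) ^+ j * wedgeB n K j a b).
Proof.
move=> HK Hf; rewrite wedgeB_K // /wedgeK /II !mulr_sumr -big_split /=.
rewrite mulr_sumr; apply: eq_bigr => s /andP[sK /eqP cs].
rewrite Hf // /d_i /d_b cs /=; case: ifP => _; ring.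
Qed.

Lemma L2 (f a e : Defs.form R N) :
  (forall S, S \in K -> #|S| = j.+2 -> f S = dprim K o a S) ->
  wedgeK K j.+1 f e = II a e.
Proof.
move=> Hf; rewrite exchange; apply: eq_bigr => S /andP[SK /eqP cS].
by rewrite Hf.
Qed.

Lemma L3 (f a g : Defs.form R N) (c : R) :
  (forall t, t \in bnd n K -> #|t| = j.+1 -> f t = c * a t) ->
  wedgeB n K j f g = c * wedgeB n K j a g.
Proof.
move=> Hf; rewrite /wedgeB mulr_sumr; apply: eq_bigr => t /andP[tb /eqP ct].
by rewrite Hf // mulrA.
Qed.


Definition dlt (s0 : {set 'I_N}) : Defs.form R N := fun s => if s == s0 then 1 else 0.
Definition zf : Defs.form R N := fun _ => 0.

Lemma dl (P : pred {set 'I_N}) s0 (f : Defs.form R N) : P s0 ->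
  \sum_(s | P s) dlt s0 s * f s = f s0.
Proof.
move=> Ps; rewrite (bigD1 s0) //= /dlt eqxx mul1r big1 ?addr0 //.
by move=> s /andP[_ /negbTE ->]; rewrite mul0r.
Qed.

Lemma dr (P : pred {set 'I_N}) s0 (f : Defs.form R N) : P s0 ->
  \sum_(s | P s) f s * dlt s0 s = f s0.
Proof.
move=> Ps; rewrite -(dl f Ps); apply: eq_bigr => s _; exact: mulrC.
Qed.

Lemma D1 s0 f : s0 \in K -> #|s0| = j.+1 -> wedgeK K j (dlt s0) f = f s0.
Proof. by move=> sK cs; rewrite /wedgeK dl // sK cs eqxx. Qed.
Lemma D1' s0 f : s0 \in K -> #|s0| = j.+1 -> wedgeK K j f (dlt s0) = f s0.
Proof. by move=> sK cs; rewrite /wedgeK dr // sK cs eqxx. Qed.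
Lemma D2 s0 e : s0 \in K -> #|s0| = j.+1 ->
  II (dlt s0) e = \sum_(S in K | facet s0 S) incidence R o s0 S * e S.
Proof. move=> sK cs; rewrite /II.
by rewrite (dl (fun s => \sum_(S in K | facet s S) incidence R o s S * e S)) // sK cs eqxx.
Qed.
Lemma D4 t0 a : t0 \in bnd n K -> #|t0| = j.+1 -> wedgeB n K j a (dlt t0) = a t0.
Proof. by move=> sK cs; rewrite /wedgeB dr // sK cs eqxx. Qed.
Lemma D5 s0 g : simplicial_complex K -> s0 \in K -> #|s0| = j.+1 ->
  wedgeB n K j (dlt s0) g = if s0 \in bnd n K then g s0 else 0.
Proof.
move=> HK sK cs; rewrite wedgeB_K //.
by rewrite (dl (fun s => if s \in bnd n K then g s else 0)) // sK cs eqxx.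
Qed.

Lemma Z1 a : wedgeK K j a zf = 0.
Proof. by rewrite /wedgeK big1 // => s _; rewrite mulr0. Qed.
Lemma Z1' a : wedgeK K j zf a = 0.
Proof. by rewrite /wedgeK big1 // => s _; rewrite mul0r. Qed.
Lemma Z2 a : II a zf = 0.
Proof. by rewrite /II big1 // => s _; rewrite big1 ?mulr0 // => S _; rewrite mulr0. Qed.
Lemma Z2' a : II zf a = 0.
Proof. by rewrite /II big1 // => s _; rewrite mul0r. Qed.
Lemma Z3 a : wedgeB n K j a zf = 0.
Proof. by rewrite /wedgeB big1 // => s _; rewrite mulr0. Qed.
Lemma Z3' a : wedgeB n K j zf a = 0.
Proof. by rewrite /wedgeB big1 // => s _; rewrite mul0r. Qed.

End Lem.

Lemma D3 (R : realType) N (K : {set {set 'I_N}}) o j S0 (a : Defs.form R N) :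
  S0 \in K -> #|S0| = j.+2 -> II K o j a (dlt R S0) = dprim K o a S0.
Proof. by move=> SK cS; rewrite exchange D1'. Qed.

Lemma PE (R : realType) N (K : {set {set 'I_N}}) p' q' (x y : port R N) :
  pairing (p' + q').+1 K p'.+1 q'.+1 x y =
  wedgeK K q' (ep x) (fp y) + (-1) ^+ (q'.+1 * p') * wedgeK K q'.+1 (fq y) (eq x)
  + wedgeK K q' (ep y) (fp x) + (-1) ^+ (q'.+1 * p') * wedgeK K q'.+1 (fq x) (eq y)
  + (-1) ^+ (q' * p') * (wedgeB (p' + q').+1 K q' (fb y) (eb x)
                        + wedgeB (p' + q').+1 K q' (fb x) (eb y)).
Proof.
have E1 : ((p' + q').+1 - p'.+1 = q')%N by lia.
have E2 : ((p' + q').+1 - q'.+1 = p')%N by lia.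
have E3 : ((p' + q').+1.-1 - q' = p')%N by lia.
rewrite /pairing /wedgeK_dual /wedgeB_dual E1 E2 E3; ring.
Qed.

Theorem theorem2 (R : realType) (N m n : nat) (K : {set {set 'I_N}})
    (o : {set 'I_N} -> bool) (x : 'I_N -> 'rV[R]_m) (p q : nat) :
  simplicial_complex K -> manifold_like n K ->
  coherently_oriented R n K o ->
  geometric x K -> well_centered x K ->
  (0 < p)%N -> (0 < q)%N -> (p + q = n.+1)%N ->
  dirac_structure 0 (@Dd R N n K o p q) (@pairing R N n K p q).
Proof.
move=> HK _ _ _ _ hp hq hpq; clear x.
case: p hp hpq => // p' _; case: q hq => // q' _ hpq.
have En : n = (p' + q').+1 by lia.
subst n.
have E1 : ((p' + q').+1 - p'.+1 = q')%N by lia.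
move=> y; split.
  case=> H1y H2y H3y x [H1x H2x H3x]; rewrite E1 in H1y H3y H1x H3x.
  rewrite PE (L1 (ep x) HK H1y) (L1 (ep y) HK H1x) (L2 (eq x) H2y) (L2 (eq y) H2x).
  rewrite (L3 (eb x) H3y) (L3 (eb y) H3x).
  rewrite !sgnE /= !(oddM, oddD) /=.
  case: (odd p'); case: (odd q'); rewrite /=; ring.
pose c : R := (-1) ^+ (p'.+1 * q'.+1 + 1).
pose mk a e b := Port (fun s => c * (d_i K o e s + d_b (p' + q').+1 K b s))
   (dprim K o a) (fun t => (-1) ^+ p'.+1 * a t) a e b.
have mkD a e b : Dd (p' + q').+1 K o p'.+1 q'.+1 (mk a e b) by split.
have GF a e b : pairing (p' + q').+1 K p'.+1 q'.+1 (mk a e b) y =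
  wedgeK K q' a (fp y) + (-1) ^+ (q'.+1 * p') * wedgeK K q'.+1 (fq y) e
  + c * ((-1) ^+ q'.+1 * II K o q' (ep y) e + (-1) ^+ q' * wedgeB (p' + q').+1 K q' (ep y) b)
  + (-1) ^+ (q'.+1 * p') * II K o q' a (eq y)
  + (-1) ^+ (q' * p') * (wedgeB (p' + q').+1 K q' (fb y) b
                        + (-1) ^+ p'.+1 * wedgeB (p' + q').+1 K q' a (eb y)).
  rewrite PE /= (@L1 R N (p' + q').+1 K o q' (fun s => c * (d_i K o e s + d_b (p' + q').+1 K b s)) e b (ep y) c HK) //.
  rewrite (@L2 R N K o q' (dprim K o a) a (eq y)) //.
  rewrite (@L3 R N (p' + q').+1 K q' (fun t => (-1) ^+ p'.+1 * a t) a (eb y) ((-1) ^+ p'.+1)) //.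
move=> H; rewrite /Dd E1; split.
- move=> s sK cs.
  have := H _ (mkD (dlt R s) (@zf R N) (@zf R N)).
  rewrite GF D1 // Z1 Z2 Z3 Z3 D2 // D5 //.
  rewrite /d_i /d_b cs /= /c.
  case: (s \in bnd _ K) => Hs; rewrite !sgnE /= !(oddM, oddD) /= in Hs *;
  case: (odd p') Hs; case: (odd q'); rewrite /= => Hs; lra.
- move=> S SK cS.
  have := H _ (mkD (@zf R N) (dlt R S) (@zf R N)).
  rewrite GF Z1' D1' // D3 // Z3 Z2' Z3 Z3'.
  rewrite /c !sgnE /= !(oddM, oddD) /=.
  case: (odd p'); case: (odd q'); rewrite /= => Hs; lra.
- move=> t tb ct.
  have := H _ (mkD (@zf R N) (@zf R N) (dlt R t)).
  rewrite GF Z1' Z1 Z2 D4 // D4 // Z2' Z3'.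
  rewrite /c !sgnE /= !(oddM, oddD) /=.
  case: (odd p'); case: (odd q'); rewrite /= => Hs; lra.
Qed.
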